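(* Let $X\in\mathbb{R}^{n\times p}$, $\mathbf y\in\mathbb{R}^n$, $\mathbf y\neq\mathbf 0$, $0<\lambda_1\le\|X^T\mathbf y\|_\infty$, $0<\lambda_2<\lambda_1$, and $\mathbf x\in\mathbb{R}^n$ with $\mathbf x\neq\mathbf 0$. Let $\mathbf a=\frac{\mathbf y}{\lambda_1}-\boldsymbol\theta_1^*$ and $\mathbf b=\frac{\mathbf y}{\lambda_2}-\boldsymbol\theta_1^*$. Consider the optimization problem $$\min_{\mathbf r\in\mathbb{R}^n}\ \langle\mathbf x,\mathbf r\rangle\quad\text{subject to}\quad \langle\mathbf a,\mathbf r+\mathbf b\rangle\le 0,\ \ \|\mathbf r\|_2^2\le\|\mathbf b\|_2^2.$$ Its optimal value equals $-\|\mathbf x\|_2\|\mathbf b\|_2$ if $\frac{\langle\mathbf b,\mathbf a\rangle}{\|\mathbf b\|_2}\le\frac{\langle\mathbf x,\mathbf a\rangle}{\|\mathbf x\|_2}$, and otherwise (in which case $\mathbf a\ne\mathbf 0$) it equals $$-\|\mathbf x^\perp\|_2\sqrt{\|\mathbf b\|_2^2-\frac{\langle\mathbf b,\mathbf a\rangle^2}{\|\mathbf a\|_2^2}}-\frac{\langle\mathbf a,\mathbf b\rangle\langle\mathbf x,\mathbf a\rangle}{\|\mathbf a\|_2^2},$$ where $\mathbf x^\perp=\mathbf x-\mathbf a\frac{\langle\mathbf x,\mathbf a\rangle}{\|\mathbf a\|_2^2}$.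
   Context: $X\in\mathbb{R}^{n\times p}$ is a matrix and $\mathbf y\in\mathbb{R}^n$ a vector. Let $F=\{\boldsymbol\theta\in\mathbb{R}^n:\|X^T\boldsymbol\theta\|_\infty\le 1\}$. For $\lambda>0$, the Lasso dual optimum $\boldsymbol\theta^*(\lambda)$ is the unique minimizer of $\frac12\|\boldsymbol\theta-\mathbf y/\lambda\|_2^2$ over $\boldsymbol\theta\in F$, i.e. the Euclidean projection of $\mathbf y/\lambda$ onto $F$. Write $\boldsymbol\theta_1^*=\boldsymbol\theta^*(\lambda_1)$. *)

(* Defs.v *)
From HB Require Import structures.
From mathcomp Require Import all_boot all_order all_algebra.
Set Implicit Arguments. Unset Strict Implicit. Unset Printing Implicit Defensive.
Import Order.TTheory GRing.Theory Num.Theory.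
Local Open Scope ring_scope.

Definition dotv (R : rcfType) (n : nat) (u v : 'cV[R]_n) : R :=
  \sum_(i < n) u i 0 * v i 0.

Definition norm2 (R : rcfType) (n : nat) (u : 'cV[R]_n) : R :=
  Num.sqrt (dotv u u).

Definition norminf (R : rcfType) (n : nat) (u : 'cV[R]_n) : R :=
  \big[Num.max/0]_(i < n) `|u i 0|.

Definition inF (R : rcfType) (n p : nat) (X : 'M[R]_(n, p)) (th : 'cV[R]_n) : Prop :=
  norminf (X^T *m th) <= 1.

Definition is_dual_opt (R : rcfType) (n p : nat) (X : 'M[R]_(n, p))
  (y : 'cV[R]_n) (lam : R) (th : 'cV[R]_n) : Prop :=
  inF X th /\
  forall t : 'cV[R]_n, inF X t ->
    2^-1 * dotv (th - lam^-1 *: y) (th - lam^-1 *: y)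
    <= 2^-1 * dotv (t - lam^-1 *: y) (t - lam^-1 *: y).

(* Main.v *)
Require Import Defs.
From HB Require Import structures.
From mathcomp Require Import all_boot all_order all_algebra.
From mathcomp Require Import ring lra.
Import Order.TTheory GRing.Theory Num.Theory.
Set Implicit Arguments. Unset Strict Implicit.
Local Open Scope ring_scope.

Lemma sq_lt (R : rcfType) (x y : R) : 0 <= x -> 0 <= y -> x^+2 < y^+2 -> x < y.
Proof. by move=> hx hy; rewrite ltr_pXn2r // ?nnegrE. Qed.

Lemma key (R : rcfType) (p s al be nx nb A' : R) : 0 <= p -> 0 <= s -> 0 < A' -> 0 < nx -> 0 < nb ->
  nx^+2 = p^+2 + al^+2 * A' -> nb^+2 = s^+2 + be^+2 * A' -> al * nb < be * nx ->
  (be < 0 \/ 0 < al) -> s * al < p * be.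
Proof.
move=> hp hs hA hnx hnb ex eb h [hbe|hal].
  have hal : al < 0.
    have : al * nb < 0 by nra.
    by rewrite pmulr_llt0.
  have h2 : (- (be * nx))^+2 < (- (al * nb))^+2.
    apply: ltrXn2r => //; [by rewrite oppr_ge0; nra | lra].
  rewrite !sqrrN !exprMn ex eb in h2.
  have h3 : (- (p*be))^+2 < (- (s * al))^+2 by rewrite !sqrrN !exprMn; nra.
  have : - (p * be) < - (s * al) by apply: sq_lt h3; nra.
  lra.
have hbe : 0 < be.
  have : 0 < be * nx by nra.
  by rewrite pmulr_lgt0.
have h2 : (al * nb)^+2 < (be * nx)^+2.
  apply: ltrXn2r => //; nra.
rewrite !exprMn ex eb in h2.
have h3 : (s * al)^+2 < (p * be)^+2 by rewrite !exprMn; nra.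
apply: sq_lt h3; nra.
Qed.

Section Vec.
Variables (R : rcfType) (n : nat).
Implicit Types u v w : 'cV[R]_n.

Lemma dotvC u v : dotv u v = dotv v u.
Proof. by rewrite /dotv; apply: eq_bigr => i _; rewrite mulrC. Qed.
Lemma dotvDl u v w : dotv (u + v) w = dotv u w + dotv v w.
Proof. by rewrite /dotv -big_split; apply: eq_bigr => i _; rewrite !mxE mulrDl. Qed.
Lemma dotvDr u v w : dotv u (v + w) = dotv u v + dotv u w.
Proof. by rewrite dotvC dotvDl !(dotvC u). Qed.
Lemma dotvZl k u v : dotv (k *: u) v = k * dotv u v.
Proof. by rewrite /dotv mulr_sumr; apply: eq_bigr => i _; rewrite !mxE mulrA. Qed.
Lemma dotvZr k u v : dotv u (k *: v) = k * dotv u v.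
Proof. by rewrite dotvC dotvZl dotvC. Qed.
Lemma dotvNl u v : dotv (- u) v = - dotv u v.
Proof. by rewrite -scaleN1r dotvZl mulN1r. Qed.
Lemma dotvNr u v : dotv u (- v) = - dotv u v.
Proof. by rewrite dotvC dotvNl dotvC. Qed.
Lemma dotvBl u v w : dotv (u - v) w = dotv u w - dotv v w.
Proof. by rewrite dotvDl dotvNl. Qed.
Lemma dotvBr u v w : dotv u (v - w) = dotv u v - dotv u w.
Proof. by rewrite dotvDr dotvNr. Qed.
Lemma dotv0l v : dotv 0 v = 0.
Proof. by rewrite /dotv big1 // => i _; rewrite mxE mul0r. Qed.
Lemma dotv0r v : dotv v 0 = 0.
Proof. by rewrite dotvC dotv0l. Qed.
Lemma dotv_ge0 u : 0 <= dotv u u.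
Proof. by apply: sumr_ge0 => i _; rewrite -expr2 sqr_ge0. Qed.
Lemma dotv_eq0 u : dotv u u = 0 -> u = 0.
Proof.
move/eqP; rewrite psumr_eq0; last by move=> i _; rewrite -expr2 sqr_ge0.
move/allP=> H; apply/matrixP=> i j; rewrite ord1 mxE; apply/eqP.
by have := H i (mem_index_enum _); rewrite /= mulf_eq0 orbb.
Qed.
Lemma normsq u : norm2 u ^+ 2 = dotv u u.
Proof. by rewrite sqr_sqrtr // dotv_ge0. Qed.
Lemma norm_ge0 u : 0 <= norm2 u.
Proof. exact: sqrtr_ge0. Qed.
Lemma norm_eq0 u : norm2 u = 0 -> u = 0.
Proof. by move=> h; apply: dotv_eq0; rewrite -normsq h expr0n. Qed.
Lemma norm_gt0 u : u != 0 -> 0 < norm2 u.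
Proof.
move=> hu; rewrite lt0r norm_ge0 andbT; apply/eqP => /norm_eq0 h.
by move: hu; rewrite h eqxx.
Qed.
Lemma dot2_le u v : 2 * dotv u v <= dotv u u + dotv v v.
Proof.
have := dotv_ge0 (u - v); rewrite dotvBl !dotvBr (dotvC v u); lra.
Qed.
Lemma CS u v : - (norm2 u * norm2 v) <= dotv u v.
Proof.
case: (norm2 u =P 0) => [/norm_eq0 ->|hu].
  by rewrite dotv0l oppr_le0 mulr_ge0 // norm_ge0.
case: (norm2 v =P 0) => [/norm_eq0 ->|hv].
  by rewrite dotv0r oppr_le0 mulr_ge0 // norm_ge0.
have hu' : 0 < norm2 u by rewrite lt0r norm_ge0 andbT; apply/eqP.
have hv' : 0 < norm2 v by rewrite lt0r norm_ge0 andbT; apply/eqP.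
have := dotv_ge0 (norm2 v *: u + norm2 u *: v).
rewrite !(dotvDl, dotvDr, dotvZl, dotvZr) -!normsq (dotvC v u) => h.
have hk : 0 < norm2 u * norm2 v by rewrite mulr_gt0.
have : 0 <= (norm2 u * norm2 v) * (norm2 u * norm2 v + dotv u v) by nra.
rewrite pmulr_rge0 //; lra.
Qed.
End Vec.
Lemma main (R : rcfType) (n : nat) (a b x : 'cV[R]_n) (hx : x != 0) :
  let feasible (r : 'cV[R]_n) :=
    dotv a (r + b) <= 0 /\ norm2 r ^+ 2 <= norm2 b ^+ 2 in
  let cond := dotv b a / norm2 b <= dotv x a / norm2 x in
  let xperp := x - (dotv x a / norm2 a ^+ 2) *: a in
  let v :=
    if cond then - (norm2 x * norm2 b)
    else - (norm2 xperp * Num.sqrt (norm2 b ^+ 2 - dotv b a ^+ 2 / norm2 a ^+ 2))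
         - dotv a b * dotv x a / norm2 a ^+ 2 in
  (~~ cond -> a != 0) /\
  (exists r, feasible r /\ dotv x r = v) /\
  (forall r, feasible r -> v <= dotv x r).
Proof.
move=> feasible cond xperp v; rewrite {}/v {}/xperp {}/cond {}/feasible.
have hNx := norm_gt0 hx.
have hNx0 : norm2 x != 0 by rewrite gt_eqF.
have hNb := norm_ge0 b.
have [hc|hc] := boolP (dotv b a / norm2 b <= dotv x a / norm2 x).
  split; first by [].
  split.
    exists ((- (norm2 b / norm2 x)) *: x); split; first split.
    - rewrite dotvDr dotvZr.
      case: (norm2 b =P 0) => [/norm_eq0 ->|hb0].
        by rewrite dotv0r /norm2 dotv0r sqrtr0 mul0r oppr0 mul0r addr0.
      have hb : 0 < norm2 b by rewrite lt0r hNb andbT; apply/eqP.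
      move: hc; rewrite ler_pdivrMr // (dotvC b a) (dotvC x a) => hc.
      have -> : - (norm2 b / norm2 x) * dotv a x = - (dotv a x / norm2 x * norm2 b) by field.
      lra.
    - rewrite !normsq dotvZl dotvC dotvZl -!normsq.
      rewrite le_eqVlt; apply/orP; left; apply/eqP; by field.
    - by rewrite dotvZr -normsq; field.
  move=> r [h1 h2].
  have hr : norm2 r <= norm2 b.
    by rewrite -(ler_pXn2r (_ : (0 < 2)%N)) ?nnegrE ?norm_ge0.
  have := CS x r; have := norm_ge0 r; nra.

have ha : a != 0.
  apply/negP => /eqP ha; move: hc; by rewrite ha !dotv0r !mul0r lexx.
split; first by [].
have hA : 0 < dotv a a by rewrite -normsq exprn_gt0 // norm_gt0.
have hA0 : dotv a a != 0 by rewrite gt_eqF.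
rewrite !normsq (dotvC b a) in hc *.
set A := dotv a a in hA hA0 *.
set al := dotv x a in hc *.
set be := dotv a b in hc *.
set B := dotv b b.
set xp := x - (al / A) *: a.
have hxpa : dotv a xp = 0.
  by rewrite /xp dotvBr dotvZr (dotvC a x) -/al -/A divfK // subrr.
have hxpa' : dotv xp a = 0 by rewrite dotvC.
have hxx : dotv x x = dotv xp xp + al ^+ 2 / A.
  have -> : dotv xp xp = dotv x xp by rewrite {1}/xp dotvBl dotvZl hxpa mulr0 subr0.
  by rewrite /xp dotvBr dotvZr -/al; field.
have hxdef : x = xp + (al / A) *: a by rewrite /xp subrK.
clearbody xp.
have hS : 0 <= B - be ^+ 2 / A.
  have := dotv_ge0 (b - (be / A) *: a).
  rewrite dotvBl !dotvBr !dotvZl !dotvZr (dotvC b a) -/be -/B.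
  have -> : B - be / A * be - (be / A * be - be / A * (be / A * A)) = B - be ^+ 2 / A by field.
  by [].
set S := B - be ^+ 2 / A in hS *.
set s := Num.sqrt S.
have hs : 0 <= s := sqrtr_ge0 _.
have hs2 : s ^+ 2 = S by rewrite sqr_sqrtr.
set p := norm2 xp.
have hp : 0 <= p := norm_ge0 _.
have hp2 : p ^+ 2 = dotv xp xp by rewrite normsq.
set rs := (- (be / A)) *: a + (- (s / p)) *: xp.
have hrs_a : dotv a rs = - be by rewrite /rs dotvDr !dotvZr hxpa -/A mulr0 addr0 mulNr divfK.
have hrs_x : dotv x rs = - (p * s) - be * al / A.
  rewrite /rs dotvDr !dotvZr -/al.
  have -> : dotv x xp = p ^+ 2.
    by rewrite hp2 {1}hxdef dotvDl dotvZl hxpa mulr0 addr0.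
  have [->|hp0] := eqVneq p 0; first by rewrite invr0 !mulr0 oppr0 !mul0r oppr0 addr0 -/al sub0r; field.
  by field; rewrite hA0 hp0.
have hrs_rs : dotv rs rs = be ^+ 2 / A + (s / p) ^+ 2 * p ^+ 2.
  by rewrite /rs !(dotvDl, dotvDr, dotvZl, dotvZr) ?hxpa ?hxpa' -hp2 -/A; move: (s / p) => k; field.
have hsp : (s / p) ^+ 2 * p ^+ 2 <= s ^+ 2.
  have [->|hp0] := eqVneq p 0; first by rewrite expr0n /= mulr0 sqr_ge0.
  by rewrite le_eqVlt; apply/orP; left; apply/eqP; field.
split.
  exists rs; split; last by [].
  split; first by rewrite dotvDr hrs_a -/be addNr.
  rewrite !normsq hrs_rs -/B; have hSd : S = B - be ^+ 2 / A by []; lra.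
move=> r [h1 h2].
rewrite dotvDr -/be in h1.
rewrite !normsq -/B in h2.
set t := dotv a r in h1.
have hxr : dotv x r = dotv xp r + al / A * t.
  by rewrite {1}hxdef dotvDl dotvZl.
rewrite hxr.
have hA' : 0 < A^-1 by rewrite invr_gt0.
have hnot : al / norm2 x < be / norm2 b by rewrite ltNge.
have hnx2 : norm2 x ^+ 2 = p ^+ 2 + al ^+ 2 * A^-1 by rewrite normsq hxx hp2.
have hnb2 : norm2 b ^+ 2 = s ^+ 2 + be ^+ 2 * A^-1.
  by rewrite normsq hs2 /S -/B; ring.
have hcross : 0 < norm2 b -> al * norm2 b < be * norm2 x.
  by move=> hb; move: hnot; rewrite ltr_pdivrMr // mulrAC ltr_pdivlMr.
have [hs0|hsn0] := eqVneq s 0.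
  have hB : B = be ^+ 2 / A.
    have : S = 0 by rewrite -hs2 hs0 expr0n.
    rewrite /S; lra.
  have [hbe|hbe] := lerP 0 be.
    set w := r + (be / A) *: a.
    have hw : dotv w w = dotv r r + 2 * (be / A) * t + be ^+ 2 / A.
      by rewrite /w !(dotvDl, dotvDr, dotvZl, dotvZr) (dotvC r a) -/t -/A; field.
    have hbt : (be / A) * (t + be) <= 0 by apply: mulr_ge0_le0 => //; apply: divr_ge0 => //; apply: ltW.
    have hw0 : dotv w w <= 0 by rewrite hw; lra.
    have : w = 0 by apply: dotv_eq0; apply/eqP; rewrite eq_le hw0 dotv_ge0.
    move/eqP; rewrite addr_eq0 => /eqP hr.
    have ht : t = - be by rewrite /t hr dotvNr dotvZr -/A; field.
    have hxr0 : dotv xp r = 0 by rewrite hr dotvNr dotvZr hxpa' mulr0 oppr0.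
    rewrite hxr0 ht hs0.
    by rewrite le_eqVlt; apply/orP; left; apply/eqP; field.
  have hb : 0 < norm2 b.
    rewrite lt0r hNb andbT; apply/eqP => h0; move: hnb2; rewrite h0 hs0 => hh.
    have hbb : 0 < be * be by nra.
    nra.
  have := key hp hs hA' hNx hb hnx2 hnb2 (hcross hb) (or_introl hbe).
  rewrite hs0 mul0r => hh; nra.
have hspos : 0 < s by rewrite lt0r hsn0 hs.
have hb : 0 < norm2 b.
  rewrite lt0r hNb andbT; apply/eqP => h0; move: hnb2; rewrite h0 => hh.
  have hbb : 0 <= be * be by nra.
  have hss : 0 < s * s by nra.
  nra.
have hk : s * al <= p * be.
  have [hbe|hbe] := ltrP be 0.
    by apply/ltW/(key hp hs hA' hNx hb hnx2 hnb2 (hcross hb)); left.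
  have [hal|hal] := ltrP 0 al.
    by apply/ltW/(key hp hs hA' hNx hb hnx2 hnb2 (hcross hb)); right.
  nra.
have bracket : 0 <= s * dotv xp r + p * (B + be * t / A).
  have [hp0|hp0] := eqVneq p 0.
    have -> : xp = 0 by apply: norm_eq0.
    by rewrite dotv0l hp0 mulr0 mul0r addr0.
  have hrr : dotv rs r = - (be / A) * t + - (s / p) * dotv xp r.
    by rewrite /rs dotvDl !dotvZl -/t.
  have hrsB : dotv rs rs = B.
    rewrite hrs_rs.
    have -> : (s / p) ^+ 2 * p ^+ 2 = s ^+ 2 by field.
    rewrite hs2 /S; ring.
  have hle : dotv rs r <= B by have := dot2_le rs r; lra.
  have hprr : p * dotv rs r = - (p * (be / A) * t) - s * dotv xp r.
    by rewrite hrr; field; rewrite ?hA0 ?hp0.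
  have := ler_wpM2l hp hle.
  rewrite hprr; lra.
have hneg : (t + be) * (p * be - s * al) / A <= 0.
  apply: mulr_le0_ge0; last exact: ltW.
  by apply: mulr_le0_ge0 => //; lra.
have hps : p * s ^+ 2 = p * (B - be ^+ 2 / A) by rewrite hs2.
have hst : 0 <= s * (dotv xp r + al / A * t + p * s + be * al / A) by nra.
rewrite pmulr_rge0 // in hst; lra.
Qed.

Theorem theorem2 (R : rcfType) (n p : nat) (X : 'M[R]_(n, p)) (y : 'cV[R]_n)
  (lam1 lam2 : R) (x th1 : 'cV[R]_n)
  (hy : y != 0) (hl1 : 0 < lam1) (hl1y : lam1 <= norminf (X^T *m y))
  (hl2 : 0 < lam2) (hl21 : lam2 < lam1) (hx : x != 0)
  (hth1 : is_dual_opt X y lam1 th1) :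
  let a := lam1^-1 *: y - th1 in
  let b := lam2^-1 *: y - th1 in
  let feasible (r : 'cV[R]_n) :=
    dotv a (r + b) <= 0 /\ norm2 r ^+ 2 <= norm2 b ^+ 2 in
  let cond := dotv b a / norm2 b <= dotv x a / norm2 x in
  let xperp := x - (dotv x a / norm2 a ^+ 2) *: a in
  let v :=
    if cond then - (norm2 x * norm2 b)
    else - (norm2 xperp * Num.sqrt (norm2 b ^+ 2 - dotv b a ^+ 2 / norm2 a ^+ 2))
         - dotv a b * dotv x a / norm2 a ^+ 2 in
  (~~ cond -> a != 0) /\
  (exists r, feasible r /\ dotv x r = v) /\
  (forall r, feasible r -> v <= dotv x r).
Proof.
move=> a b.
exact: (main (lam1^-1 *: y - th1) (lam2^-1 *: y - th1) hx).
Qed.
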